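(* Fix $\beta=(\beta_1,\beta_2)\in\mathbb{R}^2$ with $\beta_1>\beta_2$. Let $P_\sigma:=\{(S_1,S_2)\in\mathbb{R}^2: S_1+S_2\le 1\}$, $I:=1-S_1-S_2$, $\mathcal{P}:=\{(X,I)\in\mathbb{R}^2: I\ge 0\}$, and $\varphi_\beta:P_\sigma\to\mathcal{P}$, $\varphi_\beta(S_1,S_2)=(\beta_1S_1+\beta_2S_2,\;1-S_1-S_2)$. For smooth functions $\Omega_1,\Omega_2:P_\sigma\to\mathbb{R}$ and reals $\gamma_1,\gamma_2$ with $\gamma_1+\gamma_2=1$, let $F_{(\Omega,\gamma)}$ be the vector field on $P_\sigma$ given by $$\dot S_1=-\beta_1S_1I-\Omega_1S_1+\Omega_2S_2+\gamma_1 I,\qquad \dot S_2=-\beta_2S_2I+\Omega_1S_1-\Omega_2S_2+\gamma_2 I .$$ For $f\in C^\infty(\mathcal{P})$ let $V_f:=f\,\partial_X+(X-1)I\,\partial_I$ (i.e. the system $\dot X=f(X,I)$, $\dot I=(X-1)I$). Then: (i) For every such $(\Omega,\gamma)$ one has $(\varphi_\beta)_*F_{(\Omega,\gamma)}=V_f$, where $$f(X,I)=\lambda I+(1-I)P(X,I)+XQ(X,I),\quad \lambda=\beta_1\gamma_1+\beta_2\gamma_2,$$ $$P=(\beta_1\Omega_2+\beta_2\Omega_1+\beta_1\beta_2 I)\circ\varphi_\beta^{-1},\qquad Q=-(\Omega_1+\Omega_2+(\beta_1+\beta_2)I)\circ\varphi_\beta^{-1}.$$ (ii) The assignment $F_{(\Omega,\gamma)}\mapsto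 f$ is a bijection from the set of all vector fields $F_{(\Omega,\gamma)}$ (for this fixed $\beta$, all smooth $\Omega_1,\Omega_2$ and all $\gamma_1+\gamma_2=1$) onto $C^\infty(\mathcal{P})$. (iii) For every $f\in C^\infty(\mathcal{P})$ put $\lambda_f:=f(0,1)$, $Q_f(X,I):=(f(X,I)-f(0,I))/X$, $P_f(I):=(f(0,I)-f(0,1)I)/(1-I)$ (smoothly extended to $X=0$, resp. $I=1$). Then there is exactly one pair $(\Omega,\gamma)$ with $\gamma_1+\gamma_2=1$ such that $(\beta_1\Omega_2+\beta_2\Omega_1+\beta_1\beta_2I)\circ\varphi_\beta^{-1}$ does not depend on $X$ and $(\varphi_\beta)_*F_{(\Omega,\gamma)}=V_f$; it is given by $$\Omega_1=\frac{P_f+\beta_1Q_f+\beta_1^2I}{\beta_2-\beta_1}\circ\varphi_\beta,\quad \Omega_2=\frac{P_f+\beta_2Q_f+\beta_2^2I}{\beta_1-\beta_2}\circ\varphi_\beta,\quad \gamma_1=\frac{\lambda_f-\beta_2}{\beta_1-\beta_2},\ \gamma_2=\frac{\beta_1-\lambda_f}{\beta_1-\beta_2}.$$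
   Context: $(\varphi_\beta)_*F$ denotes the push-forward $D\varphi_\beta\circ F\circ\varphi_\beta^{-1}$ of a vector field $F$. The system $F_{(\Omega,\gamma)}$ is the ''SSISS model'' (two susceptible compartments $S_1,S_2$, one infectious compartment $I$, recovery rate normalized to $1$), and $X=\beta_1S_1+\beta_2S_2$ is the replacement number; the system $V_f$ is called a replacement number dynamics (RND). *)

(* Defs.v *)
From Stdlib Require Import Reals.
From Coquelicot Require Import Coquelicot.
Open Scope R_scope.

Definition dX (g : R -> R -> R) : R -> R -> R :=
  fun x y => Derive (fun t => g t y) x.
Definition dY (g : R -> R -> R) : R -> R -> R :=
  fun x y => Derive (fun t => g x t) y.

Definition cont2 (g : R -> R -> R) : Prop :=
  forall p : R * R, continuous (fun q : R * R => g (fst q) (snd q)) p.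

Fixpoint Ck (n : nat) (g : R -> R -> R) : Prop :=
  match n with
  | O => cont2 g
  | S m =>
      (forall x y, ex_derive (fun t => g t y) x /\ ex_derive (fun t => g x t) y)
      /\ Ck m (dX g) /\ Ck m (dY g) /\ cont2 g
  end.

Definition smooth (g : R -> R -> R) : Prop := forall n, Ck n g.

Definition smooth_on (D : R -> R -> Prop) (g : R -> R -> R) : Prop :=
  exists h, smooth h /\ forall x y, D x y -> g x y = h x y.

Definition eq_on (D : R -> R -> Prop) {T : Type} (g h : R -> R -> T) : Prop :=
  forall x y, D x y -> g x y = h x y.

Definition Psigma (S1 S2 : R) : Prop := S1 + S2 <= 1.
Definition Pcal (X I : R) : Prop := 0 <= I.

Definition phi (b1 b2 : R) (S1 S2 : R) : R * R :=
  (b1 * S1 + b2 * S2, 1 - S1 - S2).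

Definition phi_inv (b1 b2 : R) (X I : R) : R * R :=
  ((X - b2 * (1 - I)) / (b1 - b2), (b1 * (1 - I) - X) / (b1 - b2)).

Definition vfield := R -> R -> R * R.

(* (phi_beta)_* F = D phi o F o phi^{-1}, with the differential D phi (p) v
   computed as the directional derivative d/dt phi(p + t v) at t = 0. *)
Definition push (b1 b2 : R) (F : vfield) : vfield :=
  fun X I =>
    let p := phi_inv b1 b2 X I in
    let v := F (fst p) (snd p) in
    (Derive (fun t => fst (phi b1 b2 (fst p + t * fst v) (snd p + t * snd v))) 0,
     Derive (fun t => snd (phi b1 b2 (fst p + t * fst v) (snd p + t * snd v))) 0).

Definition Ffield (b1 b2 : R) (Om1 Om2 : R -> R -> R) (g1 g2 : R) : vfield :=
  fun S1 S2 =>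
    let I := 1 - S1 - S2 in
    (- b1 * S1 * I - Om1 S1 S2 * S1 + Om2 S1 S2 * S2 + g1 * I,
     - b2 * S2 * I + Om1 S1 S2 * S1 - Om2 S1 S2 * S2 + g2 * I).

Definition Vfield (f : R -> R -> R) : vfield :=
  fun X I => (f X I, (X - 1) * I).

Definition admissible (Om1 Om2 : R -> R -> R) (g1 g2 : R) : Prop :=
  smooth_on Psigma Om1 /\ smooth_on Psigma Om2 /\ g1 + g2 = 1.

Definition lam_of (b1 b2 g1 g2 : R) : R := b1 * g1 + b2 * g2.

Definition P_of (b1 b2 : R) (Om1 Om2 : R -> R -> R) : R -> R -> R :=
  fun X I => let p := phi_inv b1 b2 X I in
    b1 * Om2 (fst p) (snd p) + b2 * Om1 (fst p) (snd p)
    + b1 * b2 * (1 - fst p - snd p).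

Definition Q_of (b1 b2 : R) (Om1 Om2 : R -> R -> R) : R -> R -> R :=
  fun X I => let p := phi_inv b1 b2 X I in
    - (Om1 (fst p) (snd p) + Om2 (fst p) (snd p) + (b1 + b2) * (1 - fst p - snd p)).

Definition f_of (b1 b2 : R) (Om1 Om2 : R -> R -> R) (g1 g2 : R) : R -> R -> R :=
  fun X I => lam_of b1 b2 g1 g2 * I + (1 - I) * P_of b1 b2 Om1 Om2 X I
             + X * Q_of b1 b2 Om1 Om2 X I.

Definition lam_f (f : R -> R -> R) : R := f 0 1.

(* (f(X,I) - f(0,I))/X, extended at X = 0 by its limit d_X f(0,I) *)
Definition Q_f (f : R -> R -> R) (X I : R) : R :=
  if Req_EM_T X 0 then dX f 0 I else (f X I - f 0 I) / X.

(* (f(0,I) - f(0,1) I)/(1-I), extended at I = 1 by its limit f(0,1) - d_I f(0,1) *)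
Definition P_f (f : R -> R -> R) (I : R) : R :=
  if Req_EM_T I 1 then f 0 1 - dY f 0 1 else (f 0 I - f 0 1 * I) / (1 - I).

Definition Om1_f (b1 b2 : R) (f : R -> R -> R) : R -> R -> R :=
  fun S1 S2 => let q := phi b1 b2 S1 S2 in
    (P_f f (snd q) + b1 * Q_f f (fst q) (snd q) + b1 ^ 2 * snd q) / (b2 - b1).

Definition Om2_f (b1 b2 : R) (f : R -> R -> R) : R -> R -> R :=
  fun S1 S2 => let q := phi b1 b2 S1 S2 in
    (P_f f (snd q) + b2 * Q_f f (fst q) (snd q) + b2 ^ 2 * snd q) / (b1 - b2).

Definition g1_f (b1 b2 : R) (f : R -> R -> R) : R := (lam_f f - b2) / (b1 - b2).
Definition g2_f (b1 b2 : R) (f : R -> R -> R) : R := (b1 - lam_f f) / (b1 - b2).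

Definition P_indep_X (b1 b2 : R) (Om1 Om2 : R -> R -> R) : Prop :=
  forall X X' I, Pcal X I -> P_of b1 b2 Om1 Om2 X I = P_of b1 b2 Om1 Om2 X' I.

(* Main.v *)
Require Import Defs.
From Stdlib Require Import Reals Lra FunctionalExtensionality.
From Coquelicot Require Import Coquelicot.
Open Scope R_scope.

Lemma cont2_iff g : cont2 g <-> forall x y, continuity_2d_pt g x y.
Proof.
  split.
  - intros H x y. apply continuity_2d_pt_filterlim. apply (H (x,y)).
  - intros H [x y]. apply continuity_2d_pt_filterlim. apply H.
Qed.

Lemma Ck_cont n g : Ck n g -> cont2 g.
Proof. destruct n; simpl; tauto. Qed.

Lemma Ck_S n : forall g, Ck (S n) g -> Ck n g.
Proof.
  induction n; intros g H.
  - simpl in H. tauto.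
  - destruct H as (H1 & H2 & H3 & H4). split; [exact H1|].
    split; [apply IHn; exact H2|]. split; [apply IHn; exact H3|]. exact H4.
Qed.

Lemma smooth_dX g : smooth g -> smooth (dX g).
Proof. intros H n. exact (proj1 (proj2 (H (S n)))). Qed.
Lemma smooth_dY g : smooth g -> smooth (dY g).
Proof. intros H n. exact (proj1 (proj2 (proj2 (H (S n))))). Qed.
Lemma smooth_cont g : smooth g -> cont2 g.
Proof. intros H. exact (H O). Qed.
Lemma smooth_ex g : smooth g -> forall x y,
  ex_derive (fun t => g t y) x /\ ex_derive (fun t => g x t) y.
Proof. intros H. exact (proj1 (H 1%nat)). Qed.

Lemma Ck_exdiff n : forall g, Ck n g -> forall x y, ex_diff_n g n x y.
Proof.
  induction n; intros g H x y.
  - simpl. split; [|exact I]. apply cont2_iff. exact H.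
  - destruct H as (H1 & H2 & H3 & H4). simpl. split.
    + apply cont2_iff; exact H4.
    + split; [exact (proj1 (H1 x y))|]. split; [exact (proj2 (H1 x y))|]. split.
      * apply (IHn (dX g) H2).
      * apply (IHn (dY g) H3).
Qed.

Lemma smooth_diff g : smooth g -> forall x y,
  differentiable_pt_lim g x y (dX g x y) (dY g x y).
Proof.
  intros Hg x y.
  destruct (Taylor_Lagrange_2d g 1 x y) as [D [d HD]].
  { exists (mkposreal 1 Rlt_0_1). intros u v _ _. apply Ck_exdiff. apply Hg. }
  intros eps.
  assert (Hp : 0 < eps / (Rabs D + 1)).
  { apply Rdiv_lt_0_compat. apply cond_pos. pose proof (Rabs_pos D); lra. }
  exists (mkposreal _ (Rmin_pos _ _ (cond_pos d) Hp)).
  intros u v Hu Hv. simpl in Hu, Hv.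
  specialize (HD u v (Rlt_le_trans _ _ _ Hu (Rmin_l _ _)) (Rlt_le_trans _ _ _ Hv (Rmin_l _ _))).
  simpl in HD.
  unfold dX, dY.
  set (m := Rmax (Rabs (u - x)) (Rabs (v - y))) in *.
  assert (HP : DL_pol 1 g x y (u - x) (v - y) = g x y + (Derive (fun t => g t y) x * (u - x) + Derive (fun t => g x t) y * (v - y))).
  { unfold DL_pol, differential, partial_derive, Binomial.C. simpl. field. }
  rewrite HP in HD.
  assert (Hm0 : 0 <= m) by (unfold m; apply Rle_trans with (Rabs (u-x)); [apply Rabs_pos|apply Rmax_l]).
  assert (Hm : m < eps / (Rabs D + 1)).
  { unfold m. apply Rmax_lub_lt; eapply Rlt_le_trans; try eassumption; apply Rmin_r. }
  replace (g u v - g x y - (Derive (fun t : R => g t y) x * (u - x) + Derive (fun t : R => g x t) y * (v - y)))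
    with (g u v - (g x y + (Derive (fun t : R => g t y) x * (u - x) + Derive (fun t : R => g x t) y * (v - y)))) by ring.
  eapply Rle_trans; [exact HD|].
  assert (HDa : D <= Rabs D) by apply Rle_abs.
  assert (H1 : m * (Rabs D + 1) <= eps).
  { apply Rlt_le. apply (Rmult_lt_compat_r (Rabs D + 1)) in Hm; [|pose proof (Rabs_pos D); lra].
    unfold Rdiv in Hm. rewrite Rmult_assoc, Rinv_l in Hm; [lra|pose proof (Rabs_pos D); lra]. }
  pose proof (Rabs_pos D). nra.
Qed.

Lemma Ck_eq n (f g : R -> R -> R) : (forall x y, f x y = g x y) -> Ck n f -> Ck n g.
Proof.
  intros H. replace g with f; auto.
  apply functional_extensionality; intro x; apply functional_extensionality; intro y; auto.
Qed.

Lemma fun2_eq (f g : R -> R -> R) : (forall x y, f x y = g x y) -> f = g.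
Proof.
  intros H. apply functional_extensionality; intro x; apply functional_extensionality; intro y; auto.
Qed.

Lemma cont2_comp (g : R -> R -> R) (f1 f2 : R * R -> R) p :
  cont2 g -> continuous f1 p -> continuous f2 p ->
  continuous (fun q => g (f1 q) (f2 q)) p.
Proof.
  intros Hg H1 H2. apply continuous_comp_2; auto. Qed.

Lemma cont_fst (p : R * R) : continuous (fun q : R * R => fst q) p.
Proof. destruct p. apply continuous_fst. Qed.
Lemma cont_snd (p : R * R) : continuous (fun q : R * R => snd q) p.
Proof. destruct p. apply continuous_snd. Qed.
Lemma cont_plus {U : UniformSpace} (f g : U -> R) p :
  continuous f p -> continuous g p -> continuous (fun q => f q + g q) p.
Proof. intros. apply (continuous_plus f g); auto. Qed.
Lemma cont_mult {U : UniformSpace} (f g : U -> R) p :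
  continuous f p -> continuous g p -> continuous (fun q => f q * g q) p.
Proof. intros. apply (continuous_mult f g); auto. Qed.
Lemma cont_const {U : UniformSpace} (c : R) (p : U) : continuous (fun _ => c) p.
Proof. apply continuous_const. Qed.

Lemma exd_plus (f g : R -> R) x : ex_derive f x -> ex_derive g x -> ex_derive (fun t => f t + g t) x.
Proof. intros; apply (ex_derive_plus f g); auto. Qed.
Lemma Der_plus (f g : R -> R) x : ex_derive f x -> ex_derive g x -> Derive (fun t => f t + g t) x = Derive f x + Derive g x.
Proof. intros; apply (Derive_plus f g); auto. Qed.

Lemma Ck_const n : forall c, Ck n (fun _ _ => c).
Proof.
  induction n; intros c.
  - intros p. apply cont_const.
  - split; [|split; [|split]].
    + intros; split; apply ex_derive_const.
    + eapply Ck_eq; [|apply (IHn 0)]. intros; unfold dX; rewrite Derive_const; auto.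
    + eapply Ck_eq; [|apply (IHn 0)]. intros; unfold dY; rewrite Derive_const; auto.
    + intros p. apply cont_const.
Qed.

Lemma Ck_p1 n : Ck n (fun x _ => x).
Proof.
  destruct n.
  - intros p. apply cont_fst.
  - split; [|split; [|split]].
    + intros; split; [apply ex_derive_id|apply ex_derive_const].
    + eapply Ck_eq; [|apply (Ck_const n 1)]. intros; unfold dX; rewrite Derive_id; auto.
    + eapply Ck_eq; [|apply (Ck_const n 0)]. intros; unfold dY; rewrite Derive_const; auto.
    + intros p. apply cont_fst.
Qed.

Lemma Ck_p2 n : Ck n (fun _ y => y).
Proof.
  destruct n.
  - intros p. apply cont_snd.
  - split; [|split; [|split]].
    + intros; split; [apply ex_derive_const|apply ex_derive_id].
    + eapply Ck_eq; [|apply (Ck_const n 0)]. intros; unfold dX; rewrite Derive_const; auto.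
    + eapply Ck_eq; [|apply (Ck_const n 1)]. intros; unfold dY; rewrite Derive_id; auto.
    + intros p. apply cont_snd.
Qed.

Lemma Ck_lin n : forall a b u v, Ck n u -> Ck n v -> Ck n (fun x y => a * u x y + b * v x y).
Proof.
  induction n; intros a b u v Hu Hv.
  - intros p. apply cont_plus; apply cont_mult; try apply cont_const.
    apply (Hu p). apply (Hv p).
  - destruct Hu as (Hu1 & Hu2 & Hu3 & Hu4). destruct Hv as (Hv1 & Hv2 & Hv3 & Hv4).
    split; [|split; [|split]].
    + intros x y. destruct (Hu1 x y), (Hv1 x y). split; apply exd_plus; apply ex_derive_scal; auto.
    + eapply Ck_eq; [|apply (IHn a b _ _ Hu2 Hv2)]. intros x y. unfold dX.
      destruct (Hu1 x y), (Hv1 x y).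
      rewrite Der_plus. rewrite !Derive_scal. auto.
      apply ex_derive_scal; auto. apply ex_derive_scal; auto.
    + eapply Ck_eq; [|apply (IHn a b _ _ Hu3 Hv3)]. intros x y. unfold dY.
      destruct (Hu1 x y), (Hv1 x y).
      rewrite Der_plus. rewrite !Derive_scal. auto.
      apply ex_derive_scal; auto. apply ex_derive_scal; auto.
    + intros p. apply cont_plus; apply cont_mult; try apply cont_const.
      apply (Hu4 p). apply (Hv4 p).
Qed.

Lemma Ck_mult n : forall u v, Ck n u -> Ck n v -> Ck n (fun x y => u x y * v x y).
Proof.
  induction n; intros u v Hu Hv.
  - intros p. apply cont_mult. apply (Hu p). apply (Hv p).
  - pose proof (Ck_S _ _ Hu) as Hu'. pose proof (Ck_S _ _ Hv) as Hv'.
    destruct Hu as (Hu1 & Hu2 & Hu3 & Hu4). destruct Hv as (Hv1 & Hv2 & Hv3 & Hv4).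
    split; [|split; [|split]].
    + intros x y. destruct (Hu1 x y), (Hv1 x y). split; apply ex_derive_mult; auto.
    + eapply Ck_eq; [|apply (Ck_lin n 1 1 _ _ (IHn _ _ Hu2 Hv') (IHn _ _ Hu' Hv2))].
      intros x y. unfold dX. destruct (Hu1 x y), (Hv1 x y).
      rewrite Derive_mult; auto. ring.
    + eapply Ck_eq; [|apply (Ck_lin n 1 1 _ _ (IHn _ _ Hu3 Hv') (IHn _ _ Hu' Hv3))].
      intros x y. unfold dY. destruct (Hu1 x y), (Hv1 x y).
      rewrite (Derive_mult (fun t => u x t) (fun t => v x t)); auto. ring.
    + intros p. apply cont_mult. apply (Hu4 p). apply (Hv4 p).
Qed.

Lemma sm_const c : smooth (fun _ _ => c).
Proof. intro n; apply Ck_const. Qed.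
Lemma sm_p1 : smooth (fun x _ => x).
Proof. intro n; apply Ck_p1. Qed.
Lemma sm_p2 : smooth (fun _ y => y).
Proof. intro n; apply Ck_p2. Qed.
Lemma sm_lin a b u v : smooth u -> smooth v -> smooth (fun x y => a * u x y + b * v x y).
Proof. intros Hu Hv n; apply Ck_lin; auto. Qed.
Lemma sm_mult u v : smooth u -> smooth v -> smooth (fun x y => u x y * v x y).
Proof. intros Hu Hv n; apply Ck_mult; auto. Qed.
Lemma sm_eq (f g : R -> R -> R) : (forall x y, f x y = g x y) -> smooth f -> smooth g.
Proof. intros H Hf n. eapply Ck_eq; eauto. Qed.

Lemma cont_aff a b c (p : R * R) : continuous (fun q : R * R => a * fst q + b * snd q + c) p.
Proof.
  apply cont_plus; [apply cont_plus|apply cont_const]; apply cont_mult;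
  try apply cont_const; [apply cont_fst|apply cont_snd].
Qed.

Lemma is_derive_aff a k x : is_derive (fun t => a * t + k) x a.
Proof. auto_derive; auto; ring. Qed.

Lemma comp_derive_x g a b c d e f x y :
  smooth g ->
  is_derive (fun t => g (a*t+b*y+c) (d*t+e*y+f)) x
    (a * dX g (a*x+b*y+c) (d*x+e*y+f) + d * dY g (a*x+b*y+c) (d*x+e*y+f)).
Proof.
  intros Hg. apply is_derive_Reals.
  replace (a * dX g (a*x+b*y+c) (d*x+e*y+f) + d * dY g (a*x+b*y+c) (d*x+e*y+f))
    with (dX g (a*x+b*y+c) (d*x+e*y+f) * a + dY g (a*x+b*y+c) (d*x+e*y+f) * d) by ring.
  apply (derivable_pt_lim_comp_2d g (fun t => a*t+b*y+c) (fun t => d*t+e*y+f)).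
  - apply smooth_diff; auto.
  - apply is_derive_Reals. apply (is_derive_aff a (b*y+c) x) || (auto_derive; auto; ring).
  - apply is_derive_Reals. auto_derive; auto; ring.
Qed.

Lemma comp_derive_y g a b c d e f x y :
  smooth g ->
  is_derive (fun t => g (a*x+b*t+c) (d*x+e*t+f)) y
    (b * dX g (a*x+b*y+c) (d*x+e*y+f) + e * dY g (a*x+b*y+c) (d*x+e*y+f)).
Proof.
  intros Hg. apply is_derive_Reals.
  replace (b * dX g (a*x+b*y+c) (d*x+e*y+f) + e * dY g (a*x+b*y+c) (d*x+e*y+f))
    with (dX g (a*x+b*y+c) (d*x+e*y+f) * b + dY g (a*x+b*y+c) (d*x+e*y+f) * e) by ring.
  apply (derivable_pt_lim_comp_2d g (fun t => a*x+b*t+c) (fun t => d*x+e*t+f)).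
  - apply smooth_diff; auto.
  - apply is_derive_Reals. auto_derive; auto; ring.
  - apply is_derive_Reals. auto_derive; auto; ring.
Qed.

Lemma sm_aff a b c d e f : forall g, smooth g ->
  smooth (fun x y => g (a*x+b*y+c) (d*x+e*y+f)).
Proof.
  intros g Hg n. revert g Hg. induction n; intros g Hg.
  - intros p. simpl.
    apply (cont2_comp g (fun q => a * fst q + b * snd q + c) (fun q => d * fst q + e * snd q + f) p).
    apply smooth_cont; auto. apply cont_aff. apply cont_aff.
  - split; [|split; [|split]].
    + intros x y. split; eexists; [apply comp_derive_x|apply comp_derive_y]; auto.
    + eapply Ck_eq; [|apply (Ck_lin n a d _ _ (IHn _ (smooth_dX _ Hg)) (IHn _ (smooth_dY _ Hg)))].
      intros x y. symmetry. apply (is_derive_unique (fun t => g (a*t+b*y+c) (d*t+e*y+f))). apply comp_derive_x; auto.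
    + eapply Ck_eq; [|apply (Ck_lin n b e _ _ (IHn _ (smooth_dX _ Hg)) (IHn _ (smooth_dY _ Hg)))].
      intros x y. symmetry. apply (is_derive_unique (fun t => g (a*x+b*t+c) (d*x+e*t+f))). apply comp_derive_y; auto.
    + apply (Ck_cont n). apply IHn; auto.
Qed.

Definition J (k : nat) (H : R -> R -> R) (x y : R) : R :=
  RInt (fun t => t ^ k * H (t * x) y) 0 1.

Lemma pow_le1' t k : 0 <= t <= 1 -> t ^ k <= 1.
Proof.
  intros Ht. induction k; simpl; [lra|].
  pose proof (pow_le t k (proj1 Ht)). nra.
Qed.

Lemma cont2_compU {U : UniformSpace} (g : R -> R -> R) (f1 f2 : U -> R) p :
  cont2 g -> continuous f1 p -> continuous f2 p ->
  continuous (fun q => g (f1 q) (f2 q)) p.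
Proof.
  intros Hg H1 H2. apply continuous_comp_2; auto. Qed.

Lemma cont_pow k (t : R) : continuous (fun s : R => s ^ k) t.
Proof. apply (ex_derive_continuous (fun s => s ^ k)). auto_derive; auto. Qed.
Lemma cont_lin (a : R) (t : R) : continuous (fun s : R => s * a) t.
Proof. apply (ex_derive_continuous (fun s => s * a)). auto_derive; auto. Qed.

Lemma cont_integrand k H u v t : cont2 H -> continuous (fun s => s ^ k * H (s * u) v) t.
Proof.
  intros HH. apply cont_mult. apply cont_pow.
  apply (cont2_compU H (fun s => s * u) (fun _ => v)); auto. apply cont_lin. apply cont_const.
Qed.

Lemma exRInt_integrand k H u v : cont2 H -> ex_RInt (fun t => t ^ k * H (t * u) v) 0 1.
Proof. intros HH. apply (ex_RInt_continuous (V := R_CompleteNormedModule)). intros; apply cont_integrand; auto. Qed.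

Lemma abs_bound z A : Rabs z <= A -> -A <= z <= A.
Proof. unfold Rabs; destruct (Rcase_abs z); lra. Qed.
Lemma abs_bound2 v c : Rabs (v - c) < 1 -> c - 1 <= v <= c + 1.
Proof. unfold Rabs; destruct (Rcase_abs (v - c)); lra. Qed.

Lemma J_cont k H : cont2 H -> cont2 (J k H).
Proof.
  intros HH. apply cont2_iff. intros x0 y0 eps.
  set (A := Rabs x0 + 1).
  assert (He2 : 0 < eps / 2) by (pose proof (cond_pos eps); lra).
  destruct (uniform_continuity_2d H (-A) A (y0 - 1) (y0 + 1)
              (fun x y _ _ => proj1 (cont2_iff H) HH x y) (mkposreal _ He2)) as [delta Hd].
  exists (mkposreal _ (Rmin_pos _ _ (cond_pos delta) Rlt_0_1)).
  intros u v Hu Hv. simpl in Hu, Hv.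
  assert (Hu1 : Rabs (u - x0) < delta) by (eapply Rlt_le_trans; [exact Hu|apply Rmin_l]).
  assert (Hu2 : Rabs (u - x0) < 1) by (eapply Rlt_le_trans; [exact Hu|apply Rmin_r]).
  assert (Hv1 : Rabs (v - y0) < delta) by (eapply Rlt_le_trans; [exact Hv|apply Rmin_l]).
  assert (Hv2 : Rabs (v - y0) < 1) by (eapply Rlt_le_trans; [exact Hv|apply Rmin_r]).
  unfold J.
  assert (E : RInt (fun t => t ^ k * H (t * u) v) 0 1 - RInt (fun t => t ^ k * H (t * x0) y0) 0 1
            = RInt (fun t => t ^ k * H (t * u) v - t ^ k * H (t * x0) y0) 0 1).
  { symmetry. apply (RInt_minus (V := R_CompleteNormedModule)); apply exRInt_integrand; auto. }
  rewrite E. eapply Rle_lt_trans.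
  apply (abs_RInt_le_const _ 0 1 (eps / 2)). lra.
  apply (ex_RInt_minus (V := R_NormedModule)); apply exRInt_integrand; auto.
  - intros t Ht.
    rewrite <- Rmult_minus_distr_l, Rabs_mult.
    assert (Hp : Rabs (t ^ k) <= 1).
    { rewrite Rabs_pos_eq. apply pow_le1'; auto. apply pow_le; lra. }
    assert (Hq : Rabs (H (t * u) v - H (t * x0) y0) < eps / 2).
    { apply Hd.
      - apply abs_bound. rewrite Rabs_mult, (Rabs_pos_eq t) by lra.
        unfold A; pose proof (Rabs_pos x0); nra.
      - apply abs_bound2. rewrite Rminus_diag, Rabs_R0. lra.
      - assert (Rabs u <= A).
        { unfold A. pose proof (Rabs_triang_inv u x0). lra. }
        pose proof (Rabs_pos u).
        apply abs_bound. rewrite Rabs_mult, (Rabs_pos_eq t) by lra. nra.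
      - apply abs_bound2; lra.
      - rewrite <- Rmult_minus_distr_l, Rabs_mult, (Rabs_pos_eq t) by lra.
        pose proof (Rabs_pos (u - x0)). nra.
      - exact Hv1. }
    pose proof (Rabs_pos (t ^ k)). pose proof (Rabs_pos (H (t * u) v - H (t * x0) y0)). nra.
  - pose proof (cond_pos eps). lra.
Qed.

Lemma der_H1 H t x0 y : smooth H -> is_derive (fun u => H (t*u) y) x0 (t * dX H (t*x0) y).
Proof.
  intros HH. apply (is_derive_comp (fun z => H z y) (fun u => t*u)).
  apply Derive_correct. apply (proj1 (smooth_ex H HH _ _)). auto_derive; auto; ring.
Qed.

Lemma der_H2 H x y : smooth H -> is_derive (fun u => H x u) y (dY H x y).
Proof. intros HH. apply Derive_correct. apply (proj2 (smooth_ex H HH _ _)). Qed.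

Lemma J_dX k H x y : smooth H -> is_derive (fun s => J k H s y) x (J (S k) (dX H) x y).
Proof.
  intros HH.
  assert (Hd : forall t u, Derive (fun z => t^k * H (t*z) y) u = t^(S k) * dX H (t*u) y).
  { intros. apply is_derive_unique.
    replace (t^(S k) * dX H (t*u) y) with (t^k * (t * dX H (t*u) y)) by (simpl; ring).
    apply is_derive_scal. apply der_H1; auto. }
  pose proof (is_derive_RInt_param (fun s t => t^k * H (t*s) y) 0 1 x) as P.
  unfold J.
  replace (RInt (fun t => t^(S k) * dX H (t*x) y) 0 1)
    with (RInt (fun t => Derive (fun u => t^k * H (t*u) y) x) 0 1)
    by (apply RInt_ext; intros; rewrite Hd; auto).
  apply P.
  - apply filter_forall. intros x0 t _. eexists. apply is_derive_scal. apply der_H1; auto.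
  - intros t _. apply continuity_2d_pt_ext with (fun u v => v^(S k) * dX H (v*u) y).
    { intros; rewrite Hd; auto. }
    apply continuity_2d_pt_filterlim.
    change (continuous (fun z : R*R => snd z ^ S k * dX H (snd z * fst z) y) (x,t)).
    apply cont_mult.
    + apply (continuous_comp (fun z:R*R => snd z) (fun s => s ^ S k)). apply cont_snd. apply cont_pow.
    + apply (cont2_compU (dX H) (fun z : R*R => snd z * fst z) (fun _ => y)).
      apply smooth_cont, smooth_dX; auto.
      apply cont_mult; [apply cont_snd|apply cont_fst]. apply cont_const.
  - apply filter_forall. intros. apply exRInt_integrand. apply smooth_cont; auto.
Qed.

Lemma J_dY k H x y : smooth H -> is_derive (fun s => J k H x s) y (J k (dY H) x y).
Proof.
  intros HH.
  assert (Hd : forall t u, Derive (fun z => t^k * H (t*x) z) u = t^k * dY H (t*x) u).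
  { intros. apply is_derive_unique. apply is_derive_scal. apply der_H2; auto. }
  pose proof (is_derive_RInt_param (fun s t => t^k * H (t*x) s) 0 1 y) as P.
  unfold J.
  replace (RInt (fun t => t^k * dY H (t*x) y) 0 1)
    with (RInt (fun t => Derive (fun u => t^k * H (t*x) u) y) 0 1)
    by (apply RInt_ext; intros; rewrite Hd; auto).
  apply P.
  - apply filter_forall. intros x0 t _. eexists. apply is_derive_scal. apply der_H2; auto.
  - intros t _. apply continuity_2d_pt_ext with (fun u v => v^k * dY H (v*x) u).
    { intros; rewrite Hd; auto. }
    apply continuity_2d_pt_filterlim.
    change (continuous (fun z : R*R => snd z ^ k * dY H (snd z * x) (fst z)) (y,t)).
    apply cont_mult.
    + apply (continuous_comp (fun z:R*R => snd z) (fun s => s ^ k)). apply cont_snd. apply cont_pow.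
    + apply (cont2_compU (dY H) (fun z : R*R => snd z * x) (fun z => fst z)).
      apply smooth_cont, smooth_dY; auto.
      apply cont_mult; [apply cont_snd|apply cont_const]. apply cont_fst.
  - apply filter_forall. intros. apply exRInt_integrand. apply smooth_cont; auto.
Qed.

Lemma J_Ck n : forall k H, smooth H -> Ck n (J k H).
Proof.
  induction n; intros k H HH.
  - apply J_cont, smooth_cont; auto.
  - split; [|split; [|split]].
    + intros x y. split; eexists; [apply J_dX|apply J_dY]; auto.
    + eapply Ck_eq; [|apply (IHn (S k) (dX H) (smooth_dX _ HH))].
      intros x y. symmetry. apply (is_derive_unique (fun s => J k H s y)). apply J_dX; auto.
    + eapply Ck_eq; [|apply (IHn k (dY H) (smooth_dY _ HH))].
      intros x y. symmetry. apply (is_derive_unique (fun s => J k H x s)). apply J_dY; auto.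
    + apply J_cont, smooth_cont; auto.
Qed.

Definition Dv (G : R -> R -> R) (x y : R) : R :=
  if Req_EM_T x 0 then dX G 0 y else G x y / x.

Lemma Dv_J G : smooth G -> (forall y, G 0 y = 0) -> forall x y, Dv G x y = J 0 (dX G) x y.
Proof.
  intros HG H0 x y. unfold Dv, J.
  destruct (Req_EM_T x 0) as [->|Hx].
  - rewrite (RInt_ext _ (fun _ => dX G 0 y)).
    + rewrite RInt_const. unfold scal; simpl. unfold mult; simpl. ring.
    + intros t _. simpl. rewrite Rmult_0_r. ring.
  - assert (HD : forall t, is_derive (fun s => G (s * x) y) t (x * dX G (t * x) y)).
    { intros t. rewrite (Rmult_comm t x). eapply is_derive_ext; [|apply (der_H1 G x t y HG)].
      intros s; simpl. rewrite Rmult_comm. auto. }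
    assert (HR : RInt (Derive (fun s => G (s * x) y)) 0 1 = G (1 * x) y - G (0 * x) y).
    { rewrite RInt_Derive. reflexivity.
      - intros t _. eexists; apply HD.
      - intros t _. apply continuous_ext with (fun s => x * dX G (s * x) y).
        + intros s. symmetry. apply is_derive_unique. apply HD.
        + apply cont_mult. apply cont_const.
          apply (cont2_compU (dX G) (fun s => s * x) (fun _ => y)).
          apply smooth_cont, smooth_dX; auto. apply cont_lin. apply cont_const. }
    rewrite Rmult_0_l, Rmult_1_l, H0, Rminus_0_r in HR.
    rewrite <- HR.
    rewrite (RInt_ext _ (fun t => x * (t ^ 0 * dX G (t * x) y))).
    + rewrite (RInt_scal (V := R_CompleteNormedModule) (fun t => t ^ 0 * dX G (t * x) y)).
      * unfold scal; simpl; unfold mult; simpl. field. auto.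
      * apply exRInt_integrand. apply smooth_cont, smooth_dX; auto.
    + intros t _. pose proof (is_derive_unique _ _ _ (HD t)) as E. simpl in E |- *. rewrite E. ring.
Qed.

Lemma sm_Dv G : smooth G -> (forall y, G 0 y = 0) -> smooth (Dv G).
Proof.
  intros HG H0 n. eapply Ck_eq. intros x y; symmetry; apply Dv_J; auto.
  apply J_Ck. apply smooth_dX; auto.
Qed.

Lemma sm_plus u v : smooth u -> smooth v -> smooth (fun x y => u x y + v x y).
Proof. intros. eapply sm_eq; [|apply (sm_lin 1 1 u v)]; auto. intros; simpl; ring. Qed.
Lemma sm_minus u v : smooth u -> smooth v -> smooth (fun x y => u x y - v x y).
Proof. intros. eapply sm_eq; [|apply (sm_lin 1 (-1) u v)]; auto. intros; simpl; ring. Qed.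
Lemma sm_opp u : smooth u -> smooth (fun x y => - u x y).
Proof. intros. eapply sm_eq; [|apply (sm_lin (-1) 0 u u)]; auto. intros; simpl; ring. Qed.
Lemma sm_div u c : smooth u -> smooth (fun x y => u x y / c).
Proof. intros. eapply sm_eq; [|apply (sm_lin (/c) 0 u u)]; auto. intros; simpl; unfold Rdiv; ring. Qed.
Lemma sm_pow u : smooth u -> smooth (fun x y => u x y ^ 2).
Proof. intros. eapply sm_eq; [|apply (sm_mult u u)]; auto. intros; simpl; ring. Qed.

Lemma sm_phi_inv b1 b2 h : b1 <> b2 -> smooth h ->
  smooth (fun X I => h (fst (phi_inv b1 b2 X I)) (snd (phi_inv b1 b2 X I))).
Proof.
  intros hb Hh.
  eapply sm_eq; [|apply (sm_aff (/(b1-b2)) (b2/(b1-b2)) (-b2/(b1-b2)) (-/(b1-b2)) (-b1/(b1-b2)) (b1/(b1-b2)) h Hh)].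
  intros X I. unfold phi_inv; simpl. f_equal; field; lra.
Qed.

Lemma sm_phi b1 b2 h : smooth h ->
  smooth (fun S1 S2 => h (fst (phi b1 b2 S1 S2)) (snd (phi b1 b2 S1 S2))).
Proof.
  intros Hh.
  eapply sm_eq; [|apply (sm_aff b1 b2 0 (-1) (-1) 1 h Hh)].
  intros X I. unfold phi; simpl. f_equal; ring.
Qed.

Lemma sm_fst_phi_inv b1 b2 : smooth (fun X I => fst (phi_inv b1 b2 X I)).
Proof.
  eapply sm_eq; [|apply (sm_lin (/(b1-b2)) (b2/(b1-b2)) _ _ sm_p1 (sm_plus _ _ sm_p2 (sm_const (-1))))].
  intros; unfold phi_inv; simpl. unfold Rdiv. ring.
Qed.
Lemma sm_snd_phi_inv b1 b2 : smooth (fun X I => snd (phi_inv b1 b2 X I)).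
Proof.
  eapply sm_eq; [|apply (sm_lin (-/(b1-b2)) (-b1/(b1-b2)) _ _ sm_p1 (sm_plus _ _ sm_p2 (sm_const (-1))))].
  intros; unfold phi_inv; simpl. unfold Rdiv. ring.
Qed.

Ltac smt :=
  repeat match goal with
  | |- smooth (fun _ _ => ?c) => apply sm_const
  | |- smooth (fun x _ => x) => apply sm_p1
  | |- smooth (fun _ y => y) => apply sm_p2
  | |- smooth (fun x y => fst (phi_inv _ _ x y)) => apply sm_fst_phi_inv
  | |- smooth (fun x y => snd (phi_inv _ _ x y)) => apply sm_snd_phi_inv
  | |- smooth (fun x y => ?h (fst (phi_inv _ _ x y)) (snd (phi_inv _ _ x y))) => apply sm_phi_inv; [assumption|]
  | |- smooth (fun x y => ?h (fst (phi _ _ x y)) (snd (phi _ _ x y))) => apply sm_phi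
  | |- smooth (fun x y => _ + _) => apply sm_plus
  | |- smooth (fun x y => _ - _) => apply sm_minus
  | |- smooth (fun x y => - _) => apply sm_opp
  | |- smooth (fun x y => _ * _) => apply sm_mult
  | |- smooth (fun x y => _ / _) => apply sm_div
  | |- smooth (fun x y => _ ^ 2) => apply sm_pow
  | |- smooth (fun x y => ?h x y) => assumption
  | |- smooth _ => assumption
  end.



Definition Fv b1 b2 (F : vfield) X I := F (fst (phi_inv b1 b2 X I)) (snd (phi_inv b1 b2 X I)).

Lemma push_eq b1 b2 F X I : push b1 b2 F X I =
  (b1 * fst (Fv b1 b2 F X I) + b2 * snd (Fv b1 b2 F X I), - (fst (Fv b1 b2 F X I) + snd (Fv b1 b2 F X I))).
Proof.
  unfold push, Fv. destruct (phi_inv b1 b2 X I) as [p1 p2]. simpl.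
  destruct (F p1 p2) as [v1 v2]. simpl. unfold phi; simpl.
  f_equal; apply is_derive_unique; auto_derive; auto; ring.
Qed.

Lemma part_i b1 b2 Om1 Om2 g1 g2 : b1 <> b2 -> g1 + g2 = 1 -> forall X I,
  push b1 b2 (Ffield b1 b2 Om1 Om2 g1 g2) X I = Vfield (f_of b1 b2 Om1 Om2 g1 g2) X I.
Proof.
  intros hb hg X I. rewrite push_eq. unfold Fv, Ffield, Vfield, f_of, P_of, Q_of, lam_of.
  cbv zeta. unfold phi_inv. simpl. replace g2 with (1 - g1) by lra.
  f_equal; field; lra.
Qed.

Lemma phi_phi_inv b1 b2 X I : b1 <> b2 ->
  phi b1 b2 (fst (phi_inv b1 b2 X I)) (snd (phi_inv b1 b2 X I)) = (X, I).
Proof. intros hb. unfold phi, phi_inv; simpl. f_equal; field; lra. Qed.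

Lemma phi_inv_phi b1 b2 S1 S2 : b1 <> b2 ->
  phi_inv b1 b2 (fst (phi b1 b2 S1 S2)) (snd (phi b1 b2 S1 S2)) = (S1, S2).
Proof. intros hb. unfold phi, phi_inv; simpl. f_equal; field; lra. Qed.

Lemma Pcal_Psigma b1 b2 X I : b1 <> b2 -> Pcal X I ->
  Psigma (fst (phi_inv b1 b2 X I)) (snd (phi_inv b1 b2 X I)).
Proof.
  intros hb H. unfold Pcal, Psigma, phi_inv in *; simpl.
  replace ((X - b2 * (1 - I)) / (b1 - b2) + (b1 * (1 - I) - X) / (b1 - b2)) with (1 - I) by (field; lra).
  lra.
Qed.

Lemma Psigma_Pcal b1 b2 S1 S2 : Psigma S1 S2 -> Pcal (fst (phi b1 b2 S1 S2)) (snd (phi b1 b2 S1 S2)).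
Proof. unfold Pcal, Psigma, phi; simpl. lra. Qed.

Lemma Om1_f_inv b1 b2 f X I : b1 <> b2 ->
  Om1_f b1 b2 f (fst (phi_inv b1 b2 X I)) (snd (phi_inv b1 b2 X I)) =
  (P_f f I + b1 * Q_f f X I + b1 ^ 2 * I) / (b2 - b1).
Proof. intros hb. unfold Om1_f. cbv zeta. rewrite phi_phi_inv; auto. Qed.

Lemma Om2_f_inv b1 b2 f X I : b1 <> b2 ->
  Om2_f b1 b2 f (fst (phi_inv b1 b2 X I)) (snd (phi_inv b1 b2 X I)) =
  (P_f f I + b2 * Q_f f X I + b2 ^ 2 * I) / (b1 - b2).
Proof. intros hb. unfold Om2_f. cbv zeta. rewrite phi_phi_inv; auto. Qed.

Lemma P_of_f b1 b2 f X I : b1 <> b2 ->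
  P_of b1 b2 (Om1_f b1 b2 f) (Om2_f b1 b2 f) X I = P_f f I.
Proof.
  intros hb. unfold P_of. cbv zeta. rewrite Om1_f_inv, Om2_f_inv; auto.
  unfold phi_inv; simpl. field. lra.
Qed.

Lemma Q_of_f b1 b2 f X I : b1 <> b2 ->
  Q_of b1 b2 (Om1_f b1 b2 f) (Om2_f b1 b2 f) X I = Q_f f X I.
Proof.
  intros hb. unfold Q_of. cbv zeta. rewrite Om1_f_inv, Om2_f_inv; auto.
  unfold phi_inv; simpl. field. lra.
Qed.

Lemma f_of_f b1 b2 f X I : b1 <> b2 ->
  f_of b1 b2 (Om1_f b1 b2 f) (Om2_f b1 b2 f) (g1_f b1 b2 f) (g2_f b1 b2 f) X I = f X I.
Proof.
  intros hb. unfold f_of. rewrite P_of_f, Q_of_f; auto.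
  replace (lam_of b1 b2 (g1_f b1 b2 f) (g2_f b1 b2 f)) with (f 0 1)
    by (unfold lam_of, g1_f, g2_f, lam_f; field; lra).
  unfold P_f, Q_f.
  destruct (Req_EM_T I 1) as [->|HI]; destruct (Req_EM_T X 0) as [->|HX].
  - ring.
  - field; auto.
  - field. lra.
  - field. split; auto. lra.
Qed.

Lemma loc_pos : locally 1 (fun t : R => 0 <= t).
Proof.
  exists (mkposreal 1 Rlt_0_1). intros t Ht.
  change (Rabs (t - 1) < 1) in Ht. unfold Rabs in Ht. destruct (Rcase_abs (t - 1)); lra.
Qed.

Definition Gq (h0 : R -> R -> R) := fun x y => h0 x y - h0 0 y.
Definition Qh h0 := Dv (Gq h0).
Definition Gp (h0 : R -> R -> R) := fun u x : R => h0 0 (1 + u) - h0 0 1 * (1 + u).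
Definition Ph h0 := fun X I : R => - Dv (Gp h0) (I - 1) X.

Lemma sm_h0y h0 : smooth h0 -> smooth (fun _ y => h0 0 y).
Proof.
  intros H. eapply sm_eq; [|apply (sm_aff 0 0 0 0 1 0 h0 H)]. intros; simpl. f_equal; ring.
Qed.

Lemma sm_Qh h0 : smooth h0 -> smooth (Qh h0).
Proof.
  intros H. unfold Qh. apply sm_Dv.
  - unfold Gq. apply sm_minus; auto. apply sm_h0y; auto.
  - intros; unfold Gq; ring.
Qed.

Lemma sm_Ph h0 : smooth h0 -> smooth (Ph h0).
Proof.
  intros H. unfold Ph. apply sm_opp.
  assert (HG : smooth (Dv (Gp h0))).
  { apply sm_Dv.
    - unfold Gp. apply sm_minus.
      + eapply sm_eq; [|apply (sm_aff 0 0 0 1 0 1 h0 H)]. intros; simpl. f_equal; ring.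
      + apply sm_mult. apply sm_const. apply sm_plus. apply sm_const. apply sm_p1.
    - intros; unfold Gp. rewrite Rplus_0_r. ring. }
  eapply sm_eq; [|apply (sm_aff 0 1 (-1) 1 0 0 _ HG)]. intros; simpl. f_equal; ring.
Qed.

Lemma Qh_eq f h0 X I : smooth h0 -> (forall x y, Pcal x y -> f x y = h0 x y) -> 0 <= I ->
  Qh h0 X I = Q_f f X I.
Proof.
  intros H Hf HI. unfold Qh, Dv, Q_f, Gq.
  destruct (Req_EM_T X 0) as [->|HX].
  - unfold dX. rewrite (Derive_minus (fun t => h0 t I) (fun _ => h0 0 I)).
    + rewrite Derive_const, Rminus_0_r. apply Derive_ext. intros t. symmetry. apply Hf. exact HI.
    + apply (proj1 (smooth_ex h0 H _ _)).
    + apply ex_derive_const.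
  - rewrite !Hf; auto.
Qed.

Lemma Ph_eq f h0 X I : smooth h0 -> (forall x y, Pcal x y -> f x y = h0 x y) -> 0 <= I ->
  Ph h0 X I = P_f f I.
Proof.
  intros H Hf HI. unfold Ph, Dv, P_f, Gp.
  destruct (Req_EM_T I 1) as [->|HI1].
  - rewrite Rminus_diag. destruct (Req_EM_T 0 0) as [_|C]; [|congruence].
    unfold dX, dY.
    assert (E : Derive (fun t => f 0 t) 1 = Derive (fun t => h0 0 t) 1).
    { apply Derive_ext_loc. eapply filter_imp; [|apply loc_pos]. intros t Ht. apply Hf. exact Ht. }
    rewrite E, Hf by (unfold Pcal; lra).
    assert (D : is_derive (fun t => h0 0 (1 + t) - h0 0 1 * (1 + t)) 0 (dY h0 0 1 - h0 0 1)).
    { apply (is_derive_minus (fun t => h0 0 (1 + t)) (fun t => h0 0 1 * (1 + t))).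
      - replace (dY h0 0 1) with (scal 1 (dY h0 0 1)) by (unfold scal; simpl; unfold mult; simpl; ring).
        apply (is_derive_comp (fun u => h0 0 u) (fun t => 1 + t)).
        + rewrite Rplus_0_r. apply der_H2; auto.
        + auto_derive; auto.
      - auto_derive; auto; ring. }
    pose proof (is_derive_unique _ _ _ D) as D2. simpl in D2 |- *. rewrite D2. unfold dY. ring.
  - destruct (Req_EM_T (I - 1) 0) as [C|_]; [lra|].
    replace (1 + (I - 1)) with I by ring.
    rewrite !Hf by (unfold Pcal; lra). field. split; lra.
Qed.

Lemma sm_Om1_f b1 b2 f : b1 <> b2 -> smooth_on Pcal f -> smooth_on Psigma (Om1_f b1 b2 f).
Proof.
  intros hb [h0 [H Hf]].
  set (K := fun X I => (Ph h0 X I + b1 * Qh h0 X I + b1 ^ 2 * I) / (b2 - b1)).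
  exists (fun S1 S2 => K (fst (phi b1 b2 S1 S2)) (snd (phi b1 b2 S1 S2))). split.
  - apply sm_phi. unfold K. pose proof (sm_Ph h0 H). pose proof (sm_Qh h0 H). smt.
  - intros S1 S2 HS. unfold Om1_f, K. cbv zeta.
    assert (HI : 0 <= snd (phi b1 b2 S1 S2)) by (apply (Psigma_Pcal b1 b2 S1 S2 HS)).
    rewrite (Ph_eq f h0), (Qh_eq f h0); auto.
Qed.

Lemma sm_Om2_f b1 b2 f : b1 <> b2 -> smooth_on Pcal f -> smooth_on Psigma (Om2_f b1 b2 f).
Proof.
  intros hb [h0 [H Hf]].
  set (K := fun X I => (Ph h0 X I + b2 * Qh h0 X I + b2 ^ 2 * I) / (b1 - b2)).
  exists (fun S1 S2 => K (fst (phi b1 b2 S1 S2)) (snd (phi b1 b2 S1 S2))). split.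
  - apply sm_phi. unfold K. pose proof (sm_Ph h0 H). pose proof (sm_Qh h0 H). smt.
  - intros S1 S2 HS. unfold Om2_f, K. cbv zeta.
    assert (HI : 0 <= snd (phi b1 b2 S1 S2)) by (apply (Psigma_Pcal b1 b2 S1 S2 HS)).
    rewrite (Ph_eq f h0), (Qh_eq f h0); auto.
Qed.

Lemma P_of_phi b1 b2 Om1 Om2 S1 S2 : b1 <> b2 ->
  P_of b1 b2 Om1 Om2 (fst (phi b1 b2 S1 S2)) (snd (phi b1 b2 S1 S2)) =
  b1 * Om2 S1 S2 + b2 * Om1 S1 S2 + b1 * b2 * (1 - S1 - S2).
Proof. intros hb. unfold P_of. cbv zeta. rewrite phi_inv_phi; auto. Qed.

Lemma Q_of_phi b1 b2 Om1 Om2 S1 S2 : b1 <> b2 ->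
  Q_of b1 b2 Om1 Om2 (fst (phi b1 b2 S1 S2)) (snd (phi b1 b2 S1 S2)) =
  - (Om1 S1 S2 + Om2 S1 S2 + (b1 + b2) * (1 - S1 - S2)).
Proof. intros hb. unfold Q_of. cbv zeta. rewrite phi_inv_phi; auto. Qed.

Section U.
Variables (b1 b2 : R) (hb : b1 <> b2) (f : R -> R -> R) (Om1 Om2 h1 h2 : R -> R -> R) (g1 g2 : R).
Hypotheses (H1 : smooth h1) (H2 : smooth h2) (E1 : eq_on Psigma Om1 h1) (E2 : eq_on Psigma Om2 h2)
  (hg : g1 + g2 = 1) (Hind : P_indep_X b1 b2 Om1 Om2)
  (Hfo : forall X I, Pcal X I -> f X I = f_of b1 b2 Om1 Om2 g1 g2 X I).

Let lam := lam_of b1 b2 g1 g2.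

Lemma HP X I : Pcal X I -> P_of b1 b2 Om1 Om2 X I = P_of b1 b2 h1 h2 X I.
Proof. intros HI. unfold P_of. cbv zeta. rewrite E1, E2 by (apply Pcal_Psigma; auto). auto. Qed.
Lemma HQ X I : Pcal X I -> Q_of b1 b2 Om1 Om2 X I = Q_of b1 b2 h1 h2 X I.
Proof. intros HI. unfold Q_of. cbv zeta. rewrite E1, E2 by (apply Pcal_Psigma; auto). auto. Qed.
Lemma smP : smooth (P_of b1 b2 h1 h2).
Proof. unfold P_of. cbv zeta. smt. Qed.
Lemma smQ : smooth (Q_of b1 b2 h1 h2).
Proof. unfold Q_of. cbv zeta. smt. Qed.

Lemma Hf01 : f 0 1 = lam.
Proof. rewrite Hfo by (unfold Pcal; lra). unfold f_of, lam. ring. Qed.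

Lemma QQ X I : Pcal X I -> Q_f f X I = Q_of b1 b2 Om1 Om2 X I.
Proof.
  intros HI. unfold Q_f. destruct (Req_EM_T X 0) as [->|HX].
  - unfold dX.
    rewrite (Derive_ext (fun t => f t I)
               (fun t => lam * I + (1 - I) * P_of b1 b2 h1 h2 0 I + t * Q_of b1 b2 h1 h2 t I)).
    + rewrite HQ by auto.
      assert (Hex : forall t, ex_derive (fun s => Q_of b1 b2 h1 h2 s I) t)
        by (intros; apply (proj1 (smooth_ex _ smQ t I))).
      apply is_derive_unique. auto_derive. apply Hex. ring.
    + intros t. assert (Pcal t I) by (unfold Pcal in *; auto).
      rewrite Hfo by auto. unfold f_of. rewrite (Hind t 0 I) by auto.
      rewrite HP, HQ by auto. reflexivity.
  - rewrite !Hfo by (unfold Pcal in *; auto). unfold f_of.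
    rewrite (Hind X 0 I) by auto. field. auto.
Qed.

Lemma PP X I : Pcal X I -> P_f f I = P_of b1 b2 Om1 Om2 X I.
Proof.
  intros HI. unfold P_f. destruct (Req_EM_T I 1) as [->|HI1].
  - unfold dY.
    replace (Derive (fun t => f 0 t) 1) with (lam - P_of b1 b2 h1 h2 0 1).
    + rewrite Hf01. rewrite (Hind X 0 1) by auto. rewrite HP by (unfold Pcal; lra). ring.
    + symmetry.
      rewrite (Derive_ext_loc (fun t => f 0 t)
               (fun t => lam * t + (1 - t) * P_of b1 b2 h1 h2 0 t + 0 * Q_of b1 b2 h1 h2 0 t)).
      * assert (Hex : forall t, ex_derive (fun s => P_of b1 b2 h1 h2 0 s) t)
          by (intros; apply (proj2 (smooth_ex _ smP 0 t))).
        assert (Hex2 : forall t, ex_derive (fun s => Q_of b1 b2 h1 h2 0 s) t)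
          by (intros; apply (proj2 (smooth_ex _ smQ 0 t))).
        apply is_derive_unique. auto_derive. repeat split; auto. ring.
      * eapply filter_imp; [|apply loc_pos]. intros t Ht.
        rewrite Hfo by (unfold Pcal; auto). unfold f_of.
        rewrite HP, HQ by (unfold Pcal; auto). reflexivity.
  - rewrite Hf01. rewrite Hfo by (unfold Pcal in *; auto). unfold f_of.
    rewrite (Hind X 0 I) by auto. unfold lam. field. lra.
Qed.

Lemma uniq_Om1 : eq_on Psigma Om1 (Om1_f b1 b2 f).
Proof.
  intros S1 S2 HS. pose proof (Psigma_Pcal b1 b2 S1 S2 HS) as HI.
  unfold Om1_f. cbv zeta.
  rewrite (QQ _ _ HI), (PP _ _ HI).
  rewrite P_of_phi, Q_of_phi by auto. unfold phi; simpl. field. lra.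
Qed.

Lemma uniq_Om2 : eq_on Psigma Om2 (Om2_f b1 b2 f).
Proof.
  intros S1 S2 HS. pose proof (Psigma_Pcal b1 b2 S1 S2 HS) as HI.
  unfold Om2_f. cbv zeta.
  rewrite (QQ _ _ HI), (PP _ _ HI).
  rewrite P_of_phi, Q_of_phi by auto. unfold phi; simpl. field. lra.
Qed.

Lemma uniq_g1 : g1 = g1_f b1 b2 f.
Proof. unfold g1_f, lam_f. rewrite Hf01. unfold lam, lam_of. replace g2 with (1 - g1) by lra. field. lra. Qed.
Lemma uniq_g2 : g2 = g2_f b1 b2 f.
Proof. unfold g2_f, lam_f. rewrite Hf01. unfold lam, lam_of. replace g1 with (1 - g2) by lra. field. lra. Qed.

End U.

Lemma f_from_push b1 b2 Om1 Om2 g1 g2 f : b1 <> b2 -> g1 + g2 = 1 ->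
  eq_on Pcal (push b1 b2 (Ffield b1 b2 Om1 Om2 g1 g2)) (Vfield f) ->
  forall X I, Pcal X I -> f X I = f_of b1 b2 Om1 Om2 g1 g2 X I.
Proof.
  intros hb hg Hp X I HI. specialize (Hp X I HI). rewrite part_i in Hp by auto.
  unfold Vfield in Hp. injection Hp. auto.
Qed.

Lemma adm_f b1 b2 f : b1 <> b2 -> smooth_on Pcal f ->
  admissible (Om1_f b1 b2 f) (Om2_f b1 b2 f) (g1_f b1 b2 f) (g2_f b1 b2 f).
Proof.
  intros hb Hf. split; [apply sm_Om1_f; auto|split; [apply sm_Om2_f; auto|]].
  unfold g1_f, g2_f. field. lra.
Qed.

Theorem theorem3p8 (b1 b2 : R) (hb : b2 < b1) :
  (* (i) *)
  (forall (Om1 Om2 : R -> R -> R) (g1 g2 : R),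
     admissible Om1 Om2 g1 g2 ->
     eq_on Pcal (push b1 b2 (Ffield b1 b2 Om1 Om2 g1 g2))
                (Vfield (f_of b1 b2 Om1 Om2 g1 g2)))
  /\
  (* (ii) F_(Omega,gamma) |-> f is a well-defined bijection onto C^oo(Pcal) *)
  ((forall (Om1 Om2 : R -> R -> R) (g1 g2 : R),
      admissible Om1 Om2 g1 g2 -> smooth_on Pcal (f_of b1 b2 Om1 Om2 g1 g2))
   /\ (forall (Om1 Om2 Om1' Om2' : R -> R -> R) (g1 g2 g1' g2' : R),
      admissible Om1 Om2 g1 g2 -> admissible Om1' Om2' g1' g2' ->
      (eq_on Psigma (Ffield b1 b2 Om1 Om2 g1 g2) (Ffield b1 b2 Om1' Om2' g1' g2')
       <-> eq_on Pcal (f_of b1 b2 Om1 Om2 g1 g2) (f_of b1 b2 Om1' Om2' g1' g2')))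
   /\ (forall f : R -> R -> R, smooth_on Pcal f ->
      exists (Om1 Om2 : R -> R -> R) (g1 g2 : R),
        admissible Om1 Om2 g1 g2 /\ eq_on Pcal (f_of b1 b2 Om1 Om2 g1 g2) f))
  /\
  (* (iii) *)
  (forall f : R -> R -> R, smooth_on Pcal f ->
     (admissible (Om1_f b1 b2 f) (Om2_f b1 b2 f) (g1_f b1 b2 f) (g2_f b1 b2 f)
      /\ P_indep_X b1 b2 (Om1_f b1 b2 f) (Om2_f b1 b2 f)
      /\ eq_on Pcal (push b1 b2 (Ffield b1 b2 (Om1_f b1 b2 f) (Om2_f b1 b2 f)
                                        (g1_f b1 b2 f) (g2_f b1 b2 f)))
                    (Vfield f))
     /\ (forall (Om1 Om2 : R -> R -> R) (g1 g2 : R),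
           admissible Om1 Om2 g1 g2 ->
           P_indep_X b1 b2 Om1 Om2 ->
           eq_on Pcal (push b1 b2 (Ffield b1 b2 Om1 Om2 g1 g2)) (Vfield f) ->
           eq_on Psigma Om1 (Om1_f b1 b2 f) /\ eq_on Psigma Om2 (Om2_f b1 b2 f)
           /\ g1 = g1_f b1 b2 f /\ g2 = g2_f b1 b2 f)).
Proof.
  assert (hb' : b1 <> b2) by lra.
  split; [|split; [split; [|split]|]].
  -
    intros Om1 Om2 g1 g2 [_ [_ hg]] X I _. apply part_i; auto.
  -
    intros Om1 Om2 g1 g2 [[h1 [H1 E1]] [[h2 [H2 E2]] hg]].
    exists (f_of b1 b2 h1 h2 g1 g2). split.
    + unfold f_of, P_of, Q_of. cbv zeta. smt.
    + intros X I HI. unfold f_of, P_of, Q_of. cbv zeta.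
      rewrite E1, E2 by (apply Pcal_Psigma; auto). reflexivity.
  -
    intros Om1 Om2 Om1' Om2' g1 g2 g1' g2' [_ [_ hg]] [_ [_ hg']]. split.
    + intros HF X I HI.
      pose proof (part_i b1 b2 Om1 Om2 g1 g2 hb' hg X I) as P.
      pose proof (part_i b1 b2 Om1' Om2' g1' g2' hb' hg' X I) as P'.
      rewrite push_eq in P, P'. unfold Fv in P, P'.
      rewrite HF in P by (apply Pcal_Psigma; auto).
      rewrite P in P'. unfold Vfield in P'. injection P'. auto.
    + intros Hf S1 S2 HS.
      pose proof (part_i b1 b2 Om1 Om2 g1 g2 hb' hg (fst (phi b1 b2 S1 S2)) (snd (phi b1 b2 S1 S2))) as P.
      pose proof (part_i b1 b2 Om1' Om2' g1' g2' hb' hg' (fst (phi b1 b2 S1 S2)) (snd (phi b1 b2 S1 S2))) as P'.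
      rewrite push_eq in P, P'. unfold Fv in P, P'.
      rewrite phi_inv_phi in P, P' by auto.
      unfold Vfield in P, P'.
      rewrite Hf in P by (apply Psigma_Pcal; auto).
      rewrite <- P' in P. cbn [fst snd] in P.
      destruct (Ffield b1 b2 Om1 Om2 g1 g2 S1 S2) as [v1 v2].
      destruct (Ffield b1 b2 Om1' Om2' g1' g2' S1 S2) as [w1 w2].
      simpl in P. injection P as Q1 Q2.
      assert (v1 = w1).
      { apply Rmult_eq_reg_l with (b1 - b2); [|lra]. nra. }
      f_equal; lra.
  -
    intros f Hf. exists (Om1_f b1 b2 f), (Om2_f b1 b2 f), (g1_f b1 b2 f), (g2_f b1 b2 f).
    split. apply adm_f; auto. intros X I _. apply f_of_f; auto.
  -
    intros f Hf. split.
    + split; [apply adm_f; auto|split].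
      * intros X X' I _. rewrite !P_of_f; auto.
      * intros X I _. rewrite part_i; auto.
        -- unfold Vfield. rewrite f_of_f; auto.
        -- unfold g1_f, g2_f. field. lra.
    + intros Om1 Om2 g1 g2 [[h1 [H1 E1]] [[h2 [H2 E2]] hg]] Hind Hp.
      pose proof (f_from_push b1 b2 Om1 Om2 g1 g2 f hb' hg Hp) as Hfo.
      split; [|split; [|split]].
      * exact (uniq_Om1 b1 b2 hb' f Om1 Om2 h1 h2 g1 g2 H1 H2 E1 E2 Hind Hfo).
      * exact (uniq_Om2 b1 b2 hb' f Om1 Om2 h1 h2 g1 g2 H1 H2 E1 E2 Hind Hfo).
      * exact (uniq_g1 b1 b2 hb' f Om1 Om2 g1 g2 hg Hfo).
      * exact (uniq_g2 b1 b2 hb' f Om1 Om2 g1 g2 hg Hfo).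
Qed.
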